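(* Let $G$ be a topological group and $\pi\colon G\times X\to X$ a continuous action of $G$ on a non-archimedean uniform space $(X,\mathcal U)$ such that the action is $\pi$-uniform. Then the induced action by automorphisms $\overline\pi\colon G\times B_{NA}(X,\mathcal U)\to B_{NA}(X,\mathcal U)$, $(g,u)\mapsto gu$ (determined by $g\cdot i(x)=i(gx)$), is continuous, and the universal map $i\colon (X,\mathcal U)\to B_{NA}(X,\mathcal U)$ is a $G$-equivariant uniform embedding. In particular, $(X,\mathcal U)$ is uniformly $G$-automorphizable in $\mathbf{NA}$.
   Context: All spaces and groups are Hausdorff. A uniform space is non-archimedean if its uniformity has a base of equivalence relations; a topological group is non-archimedean ($\mathbf{NA}$) if it has a local base at the identity of open subgroups. $B_{NA}(X,\mathcal U)$ is the free Boolean non-archimedean group of $(X,\mathcal U)$: a Boolean (every non-identity element of order 2) $\mathbf{NA}$ group with a uniformly continuous map $i\colon X\to B_{NA}$ (two-sided uniformity) such that every uniformly continuous map from $X$ into a Boolean $\mathbf{NA}$ group factors uniquely as a continuous homomorphism composed with $i$; algebraically it is the free Boolean group on $X$. An action $\pi$ on $(X,\mathcal U)$ is $\pi$-uniform if for every $\varepsilon\in\mathcal U$ and $g_0\in G$ there exist $\delta\in\mathcal U$ and a neighborhood $O$ of $g_0$ with $(gx,gy)\in\varepsilon$ for all $(x,y)\in\delta$, $g\in O$. A uniform $G$-space is uniformly $G$-automorphizable in $\mathbf{NA}$ if it is a uniform $G$-subspace (with the two-sided uniformity) of some $\mathbf{NA}$ topological group on which $G$ acts continuously by automorphisms. *)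

(* Defs.v *)
From HB Require Import structures.
From mathcomp Require Import all_boot all_order all_algebra.
From mathcomp Require Import monoid.
From mathcomp Require Import all_classical all_reals all_analysis.

Set Implicit Arguments.
Unset Strict Implicit.
Unset Printing Implicit Defensive.

Import GRing.Theory Num.Theory.
Local Open Scope classical_set_scope.
Local Open Scope ring_scope.

HB.structure Definition TopGroupCarrier :=
  {G of Topological G & Group G}.
Notation topGroupType := TopGroupCarrier.type.

Definition is_topological_group (G : topGroupType) : Prop :=
  continuous (fun p : G * G => (p.1 * p.2)%g) /\
  continuous (fun g : G => (g^-1)%g).

Definition is_action (G : groupType) (X : Type) (pi : G -> X -> X) : Prop :=
  (forall x, pi 1%g x = x) /\
  (forall g h x, pi (g * h)%g x = pi g (pi h x)).

Definition is_equivalence_set (X : Type) (F : set (X * X)) : Prop :=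
  [/\ (forall x, F (x, x)),
      (forall x y, F (x, y) -> F (y, x)) &
      (forall x y z, F (x, y) -> F (y, z) -> F (x, z))].

Definition nonarchimedean_uniform (X : uniformType) : Prop :=
  forall E : set (X * X), entourage E ->
    exists F : set (X * X), [/\ entourage F, is_equivalence_set F & F `<=` E].

Definition pi_uniform (G : topologicalType) (X : uniformType)
    (pi : G -> X -> X) : Prop :=
  forall (E : set (X * X)) (g0 : G), entourage E ->
    exists D : set (X * X), exists O : set G,
      [/\ entourage D, nbhs g0 O &
          forall g x y, O g -> D (x, y) -> E (pi g x, pi g y)].

Definition NA_group (P : topGroupType) : Prop :=
  forall V : set P, nbhs (1%g : P) V ->
    exists H : set P,
      [/\ open H, H 1%g, (forall a b, H a -> H b -> H (a * b^-1)%g) & H `<=` V].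

(* j : X -> P is a uniform embedding of X into P equipped with its
   two-sided uniformity (base: {(a,b) | a^-1 b \in V and b a^-1 \in V},
   V a neighbourhood of 1). *)
Definition two_sided_uniform_embedding (X : uniformType) (P : topGroupType)
    (j : X -> P) : Prop :=
  [/\ injective j,
      (forall V : set P, nbhs (1%g : P) V ->
         exists E : set (X * X), entourage E /\
           forall x y, E (x, y) -> V ((j x)^-1 * j y)%g /\ V (j y * (j x)^-1)%g) &
      (forall E : set (X * X), entourage E ->
         exists V : set P, nbhs (1%g : P) V /\
           forall x y, V ((j x)^-1 * j y)%g -> V (j y * (j x)^-1)%g -> E (x, y))].

Definition unif_G_automorphizable_NA (G : topGroupType) (X : uniformType)
    (pi : G -> X -> X) : Prop :=
  exists (P : topGroupType) (rho : G -> P -> P) (j : X -> P),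
    [/\ [/\ is_topological_group P, hausdorff_space P & NA_group P],
        (is_action rho /\
          (forall g a b, rho g (a * b)%g = (rho g a * rho g b)%g)),
        continuous (fun q : G * P => rho q.1 q.2),
        two_sided_uniform_embedding j &
        (forall g x, j (pi g x) = rho g (j x))].

(* Boolean NA groups (abelian, written additively as topologicalZmodType;
   for abelian groups the left, right and two-sided uniformities coincide,
   with base {(a,b) | b - a \in V}, V a neighbourhood of 0). *)

Definition boolean_group (B : zmodType) : Prop := forall b : B, b + b = 0.

Definition NA_zmod (B : topologicalZmodType) : Prop :=
  forall V : set B, nbhs (0 : B) V ->
    exists H : set B,
      [/\ open H, H 0, (forall a b, H a -> H b -> H (a - b)) & H `<=` V].

Definition unif_cont_zmod (X : uniformType) (B : topologicalZmodType)
    (f : X -> B) : Prop :=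
  forall V : set B, nbhs (0 : B) V ->
    exists E : set (X * X), entourage E /\ forall x y, E (x, y) -> V (f y - f x).

Definition uniform_embedding_zmod (X : uniformType) (B : topologicalZmodType)
    (f : X -> B) : Prop :=
  [/\ injective f, unif_cont_zmod f &
      forall E : set (X * X), entourage E ->
        exists V : set B, nbhs (0 : B) V /\ forall x y, V (f y - f x) -> E (x, y)].

Definition is_free_boolean_NA (X : uniformType) (B : topologicalZmodType)
    (i : X -> B) : Prop :=
  [/\ hausdorff_space B, boolean_group B, NA_zmod B, unif_cont_zmod i &
      forall H : topologicalZmodType,
        hausdorff_space H -> boolean_group H -> NA_zmod H ->
        forall f : X -> H, unif_cont_zmod f ->
          exists! phi : B -> H,
            [/\ (forall a b, phi (a + b) = phi a + phi b),
                continuous phi &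
                forall x, phi (i x) = f x]].

(* Main.v *)
Require Import Defs.
From HB Require Import structures.
From mathcomp Require Import all_boot all_order all_algebra.
From mathcomp Require Import monoid.
From mathcomp Require Import all_classical all_reals all_analysis.
Import GRing.Theory Num.Theory.
Local Open Scope classical_set_scope.
Local Open Scope ring_scope.
Set Implicit Arguments. Unset Strict Implicit. Unset Printing Implicit Defensive.

Definition subgrp (B : zmodType) (S : set B) :=
  S 0 /\ forall a b, S a -> S b -> S (a - b).

Section Quot.
Variables (B : zmodType) (S : set B) (hS : subgrp S).

Lemma subN a : S a -> S (- a).
Proof. by move=> Sa; rewrite -sub0r; apply: hS.2 => //; exact: hS.1. Qed.
Lemma subD a b : S a -> S b -> S (a + b).
Proof. by move=> Sa Sb; rewrite -[b]opprK; apply: hS.2 => //; exact: subN. Qed.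

Definition canon (b : B) : B := xget 0 [set c | S (c - b)].

Lemma canonP b : S (canon b - b).
Proof. apply: (@xgetPex _ 0 [set c | S (c - b)]); exists b => /=; rewrite subrr; exact: hS.1. Qed.

Lemma canon_eq a b : S (a - b) -> canon a = canon b.
Proof.
move=> Sab; rewrite /canon; congr xget; apply/seteqP; split => c /= Sc.
- have -> : c - b = (c - a) + (a - b) by rewrite addrA subrK.
  exact: subD.
- have -> : c - a = (c - b) - (a - b) by rewrite opprB addrA subrK.
  exact: hS.2.
Qed.

Lemma canon_eqP a b : canon a = canon b -> S (a - b).
Proof.
move=> e; have h1 := canonP a; have h2 := canonP b.
have -> : a - b = (canon b - b) - (canon a - a).
  by rewrite e [RHS]addrC opprB addrA subrK.
exact: hS.2.
Qed.

Lemma canon_idem b : canon (canon b) = canon b.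
Proof. by apply: canon_eq; exact: canonP. Qed.

Definition quot_ (_ : subgrp S) := {b : B | canon b == b}.
Definition quot := quot_ hS.
HB.instance Definition _ := Choice.copy quot {b : B | canon b == b}.

Definition qS (b : B) : quot := exist _ (canon b) (introT eqP (canon_idem b)).

Lemma qS_eq a b : qS a = qS b <-> S (a - b).
Proof.
split => [e|h]; first by apply: canon_eqP; move: (congr1 val e).
by apply: val_inj => /=; exact: canon_eq.
Qed.

Lemma qS_val (x : quot) : qS (val x) = x.
Proof. by apply: val_inj => /=; apply/eqP; case: x. Qed.

Lemma qS_valS b : S (val (qS b) - b).
Proof. exact: canonP. Qed.

Definition qadd (x y : quot) := qS (val x + val y).
Definition qopp (x : quot) := qS (- val x).
Definition qzero := qS 0.

Lemma qaddE a b : qadd (qS a) (qS b) = qS (a + b).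
Proof.
apply/qS_eq; have h1 := qS_valS a; have h2 := qS_valS b.
have -> : val (qS a) + val (qS b) - (a + b) = (val (qS a) - a) + (val (qS b) - b).
  by rewrite opprD addrACA.
exact: subD.
Qed.
Lemma qoppE a : qopp (qS a) = qS (- a).
Proof.
apply/qS_eq; have h1 := qS_valS a.
have -> : - val (qS a) - - a = - (val (qS a) - a) by rewrite opprB opprK addrC.
exact: subN.
Qed.

Lemma qelim (P : quot -> Prop) : (forall b, P (qS b)) -> forall x, P x.
Proof. by move=> h x; rewrite -(qS_val x). Qed.

Lemma qaddA : associative qadd.
Proof.
by elim/qelim => a; elim/qelim => b; elim/qelim => c; rewrite !qaddE addrA.
Qed.
Lemma qaddC : commutative qadd.
Proof. by elim/qelim => a; elim/qelim => b; rewrite !qaddE addrC. Qed.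
Lemma qadd0 : left_id qzero qadd.
Proof. by elim/qelim => a; rewrite /qzero qaddE add0r. Qed.
Lemma qaddN : left_inverse qzero qopp qadd.
Proof. by elim/qelim => a; rewrite qoppE qaddE addNr. Qed.

HB.instance Definition _ := GRing.isZmodule.Build quot qaddA qaddC qadd0 qaddN.

Lemma qS_add a b : qS (a + b) = qS a + qS b.
Proof. by rewrite -qaddE. Qed.
Lemma qS_opp a : qS (- a) = - qS a.
Proof. by rewrite -qoppE. Qed.
Lemma qS0 : qS 0 = 0.
Proof. by []. Qed.
Lemma qS_eq0 a : qS a = 0 <-> S a.
Proof. by rewrite -qS0 qS_eq subr0. Qed.

End Quot.

Definition dzmod (T : Type) : Type := T.
HB.instance Definition _ (T : zmodType) := GRing.Zmodule.copy (dzmod T) T.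
HB.instance Definition _ (T : zmodType) :=
  hasNbhs.Build (dzmod T) principal_filter.
HB.instance Definition _ (T : zmodType) :=
  Discrete_ofNbhs.Build (dzmod T) erefl.

Lemma discrete_cont2 (T : zmodType) (f : dzmod T * dzmod T -> dzmod T) : continuous f.
Proof.
move=> [p q]; apply/discrete_cvg => /=.

exists ([set p], [set q]); first by split; apply: discrete_set1.
by case=> a b [/= -> ->].
Qed.

HB.instance Definition _ (T : zmodType) :=
  PreTopologicalNmodule_isTopologicalZmodule.Build (dzmod T)
    (@discrete_cont2 T (fun x => x.1 - x.2)).

Unset Implicit Arguments. Set Strict Implicit.


Section TopZ.
Variable B : topologicalZmodType.

Lemma trans_cont (c : B) : continuous (fun u : B => c + u).
Proof.
move=> u; apply: (@continuous_comp _ _ _ (fun u => (c, u)) (fun x : B * B => x.1 + x.2)).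
  by apply: cvg_pair; [exact: cvg_cst | exact: cvg_id].
exact: add_continuous.
Qed.

Lemma nbhs_to0 (c : B) (V : set B) : nbhs c V -> nbhs 0 [set u | V (c + u)].
Proof. move=> Vc; have h := trans_cont c 0; rewrite /continuous_at addr0 in h; exact: h _ Vc. Qed.

Lemma nbhs_from0 (b : B) (V : set B) : nbhs 0 V -> nbhs b [set c | V (c - b)].
Proof.
move=> V0; have h := trans_cont (- b) b; rewrite /continuous_at addNr in h; have := h _ V0.
by apply: (filterS (P := [set c | V (- b + c)])) => c /=; rewrite addrC.

Qed.

Lemma addf_0 (H : zmodType) (f : B -> H) :
  (forall a b, f (a + b) = f a + f b) -> f 0 = 0.
Proof. move=> h; have e := h 0 0; rewrite addr0 in e; apply: (addrI (f 0)); by rewrite -e addr0. Qed.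

End TopZ.
Arguments nbhs_to0 {B c V}.
Arguments nbhs_from0 {B} b {V}.
Arguments addf_0 {B H f}.


Lemma discrete_src_cont (T : zmodType) (Y : topologicalType) (f : dzmod T -> Y) :
  continuous f.
Proof.
move=> x A /= Ax; rewrite nbhs_principalE; apply/principal_filterP => /=.
exact: nbhs_singleton.
Qed.

Section Q.
Variables (B : topologicalZmodType) (S : set B) (hS : subgrp S).

Definition dq := dzmod (quot hS).

Lemma dq_hausdorff : hausdorff_space dq.
Proof. exact: discrete_hausdorff. Qed.

Lemma dq_NA : NA_zmod dq.
Proof.
move=> V V0; exists [set 0]; split.
- exact: discrete_open.
- by [].
- by move=> a b /= -> ->; rewrite subrr.
- by move=> a /= ->; exact: nbhs_singleton.
Qed.

Lemma dq_bool : boolean_group B -> boolean_group dq.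
Proof.
move=> hb; elim/(@qelim _ _ hS) => b.
by rewrite -(@qS_add _ _ hS) hb.
Qed.

Definition dqS (b : B) : dq := qS hS b.

Lemma dqS_add a b : dqS (a + b) = dqS a + dqS b.
Proof. exact: qS_add. Qed.

Lemma dqS_eq0 a : dqS a = 0 <-> S a.
Proof. exact: qS_eq0. Qed.

Lemma dqS_cont : nbhs 0 S -> continuous dqS.
Proof.
move=> S0 b; apply/discrete_cvg => /=.
apply: (@filterS _ _ _ [set c | S (c - b)]); last exact: (nbhs_from0 b S0).
by move=> c /= Scb; apply/(@qS_eq _ _ hS).
Qed.

End Q.
Arguments discrete_src_cont {T Y} f.
Arguments dq {B S} hS.
Arguments dq_hausdorff {B S} hS.
Arguments dq_NA {B S} hS.
Arguments dq_bool {B S} hS.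
Arguments dqS {B S} hS b.
Arguments dqS_add {B S} hS.
Arguments dqS_eq0 {B S} hS a.
Arguments dqS_cont {B S} hS.

Lemma tel (M : zmodType) (a b c : M) : (a - b) + (b - c) = a - c.
Proof. by rewrite addrA subrK. Qed.

Lemma subsubE (M : zmodType) (a c s1 s2 : M) : (a - c) - (s1 - s2) = (a - s1) - (c - s2).
Proof. by rewrite !opprB addrACA [RHS]addrACA [- s1 - c]addrC. Qed.

Lemma dz_NA (T : zmodType) : NA_zmod (dzmod T).
Proof.
move=> V V0; exists [set 0]; split.
- exact: discrete_open.
- by [].
- by move=> a b /= -> ->; rewrite subrr.
- by move=> a /= ->; exact: nbhs_singleton.
Qed.

Lemma z2 (x : 'Z_2) : x + x = 0.
Proof. by case: x => -[|[|m]] // Hm; apply: val_inj. Qed.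


Section Main.
Variables (G : topGroupType) (X : uniformType) (pi : G -> X -> X)
  (B : topologicalZmodType) (i : X -> B).
Hypotheses (hact : is_action pi) (hcont : continuous (fun q : G * X => pi q.1 q.2))
  (hpu : pi_uniform pi) (hfree : is_free_boolean_NA i).

Lemma hB : hausdorff_space B. Proof. by case: hfree. Qed.
Lemma boolB : boolean_group B. Proof. by case: hfree. Qed.
Lemma naB : NA_zmod B. Proof. by case: hfree. Qed.
Lemma ucI : unif_cont_zmod i. Proof. by case: hfree. Qed.

Definition additive_map {H : zmodType} (f : B -> H) :=
  forall a b, f (a + b) = f a + f b.

Lemma add_sub {H : zmodType} {f : B -> H} : additive_map f ->
  forall a b, f (a - b) = f a - f b.
Proof.
move=> h a b; have e0 := addf_0 h.
have eN : f (- b) = - f b.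
  by apply/eqP; rewrite -addr_eq0 -h addNr e0.
by rewrite h eN.
Qed.

Lemma hom_uc {H : topologicalZmodType} {phi : B -> H} :
  additive_map phi -> continuous phi -> unif_cont_zmod (fun x => phi (i x)).
Proof.
move=> ha hc V V0.
have : nbhs 0 (phi @^-1` V).
  have h := hc 0; rewrite /continuous_at (addf_0 ha) in h; exact: h _ V0.
move=> /ucI [E [HE HEV]]; exists E; split => // x y /HEV /=.
by rewrite add_sub.
Qed.

Lemma uniq_ext {H : topologicalZmodType} {phi1 phi2 : B -> H} : hausdorff_space H -> boolean_group H ->
  NA_zmod H ->
  additive_map phi1 -> continuous phi1 -> additive_map phi2 -> continuous phi2 ->
  (forall x, phi1 (i x) = phi2 (i x)) -> phi1 = phi2.
Proof.
move=> hH bH nH a1 c1 a2 c2 e.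
case: hfree => _ _ _ _ /(_ H hH bH nH _ (hom_uc a1 c1)) [phi [_ u]].
rewrite -(u phi1) ?(u phi2) //; split => //.
Qed.

Lemma ext_g (g : G) : exists phi : B -> B,
  [/\ additive_map phi, continuous phi & forall x, phi (i x) = i (pi g x)].
Proof.
have uc : unif_cont_zmod (fun x => i (pi g x)).
  move=> V /ucI [E [HE HEV]].
  have [D [Og [HD HO HDE]]] := hpu _ g HE.
  exists D; split => // x y Dxy; apply: HEV; apply: HDE Dxy.
  exact: nbhs_singleton.
case: hfree => hh bb nn _ /(_ B hh bb nn _ uc) [phi [[a c e] _]].
by exists phi.
Qed.

Definition pibar : G -> B -> B := projT1 (choice ext_g).

Lemma pibarP g : [/\ additive_map (pibar g), continuous (pibar g)
   & forall x, pibar g (i x) = i (pi g x)].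
Proof. exact: (projT2 (choice ext_g) g). Qed.

Lemma pibar_add g : additive_map (pibar g). Proof. by case: (pibarP g). Qed.
Lemma pibar_cont g : continuous (pibar g). Proof. by case: (pibarP g). Qed.
Lemma pibar_i g x : pibar g (i x) = i (pi g x). Proof. by case: (pibarP g). Qed.
Lemma pibar_sub g a b : pibar g (a - b) = pibar g a - pibar g b.
Proof. exact: (add_sub (pibar_add g)). Qed.
Lemma pibar0 g : pibar g 0 = 0.
Proof. exact: (addf_0 (pibar_add g)). Qed.

Lemma pibar_action : is_action pibar.
Proof.
case: hact => h1 hM; split.
- move=> b; have -> // : pibar 1%g = id.
  apply: (uniq_ext hB boolB naB (pibar_add _) (pibar_cont _)).
  + by [].
  + by move=> u; apply: cvg_id.
  + by move=> x; rewrite pibar_i h1.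
- move=> g h b; suff -> : pibar (g * h)%g = (fun b => pibar g (pibar h b)) by [].
  apply: (uniq_ext hB boolB naB (pibar_add _) (pibar_cont _)).
  + by move=> u v /=; rewrite !pibar_add.
  + move=> u; apply: continuous_comp; [exact: pibar_cont | exact: pibar_cont].
  + by move=> x; rewrite !pibar_i hM.
Qed.


Lemma i_cont : continuous i.
Proof.
move=> x V /= Vix.
have V0 := nbhs_to0 Vix.
have [E [HE HEV]] := ucI _ V0.
apply: (@filterS _ _ _ (xsection E x)); last exact: nbhs_entourage.
move=> y /xsectionP Exy; have := HEV _ _ Exy.
by rewrite /= addrC subrK.
Qed.

Lemma orbit_cont x : continuous (fun g => i (pi g x)).
Proof.
have pc : continuous (fun g : G => pi g x).
  move=> g; apply: (@continuous_comp _ _ _ (fun g => (g, x)) (fun q : G * X => pi q.1 q.2)).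
    by apply: cvg_pair; [exact: cvg_id | exact: cvg_cst].
  exact: hcont.
move=> g; apply: continuous_comp; [exact: pc | exact: i_cont].
Qed.

Lemma dense (T : set B) (hT : subgrp T) (Ti : forall x, T (i x))
  (W : set B) (W0 : nbhs 0 W) (hW : subgrp W) b : exists s, T s /\ W (b - s).
Proof.
pose S := [set c | exists s, T s /\ W (c - s)].
have hS : subgrp S.
  split.
    by exists 0; split; [exact: hT.1 | rewrite subrr; exact: hW.1].
  move=> a c [s1 [T1 W1]] [s2 [T2 W2]]; exists (s1 - s2); split.
    exact: hT.2.
  by rewrite subsubE; apply: hW.2.
have S0 : nbhs 0 S.
  apply: (@filterS _ _ _ W) => // c Wc; exists 0; split; [exact: hT.1 | by rewrite subr0].
have e : dqS hS = (fun _ => 0).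
  apply: (uniq_ext (dq_hausdorff hS) (dq_bool hS boolB) (dq_NA hS) (dqS_add hS) (dqS_cont hS S0)).
  + by move=> u v; rewrite addr0.
  + by move=> u; apply: cvg_cst.
  + move=> x; apply/dqS_eq0; exists (i x); split => //; rewrite subrr; exact: hW.1.
by have /dqS_eq0 := congr1 (fun f => f b) e.
Qed.

Lemma good_sub (U : set B) (U0 : nbhs 0 U) (hU : subgrp U) g0 :
  subgrp [set s | nbhs g0 [set g | U (pibar g s - pibar g0 s)]] /\
  forall x, nbhs g0 [set g | U (pibar g (i x) - pibar g0 (i x))].
Proof.
split; first split.
- apply: (@filterS _ _ _ setT); last exact: filterT.
  by move=> g _ /=; rewrite !pibar0 subrr; exact: hU.1.
- move=> a c Ha Hc; apply: filterS (filterI Ha Hc) => g [/= Ua Uc].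
  by rewrite !pibar_sub subsubE; apply: hU.2.
- move=> x; have := orbit_cont x g0 _ (nbhs_from0 (i (pi g0 x)) U0).
  by apply: (@filterS _ _ _ [set g | U (i (pi g x) - i (pi g0 x))]) => g /=; rewrite !pibar_i.
Qed.


Lemma stepA (U : set B) (U0 : nbhs 0 U) (hU : subgrp U) (g0 : G) :
  exists W Og, [/\ nbhs 0 W, subgrp W, nbhs g0 Og &
    forall g w, Og g -> W w -> U (pibar g w)].
Proof.
have [E [HE HEV]] := ucI _ U0.
have [D [Og [HD HO HDE]]] := hpu _ g0 HE.
pose N := [set b | forall g, Og g -> U (pibar g b)].
have hN : subgrp N.
  split.
    by move=> g _; rewrite pibar0; exact: hU.1.
  by move=> a c Na Nc g Ogg; rewrite pibar_sub; apply: hU.2; [exact: Na | exact: Nc].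
have uc : unif_cont_zmod (fun x => dqS hN (i x)).
  move=> V V0; exists D; split => // x y Dxy.
  have -> : dqS hN (i y) - dqS hN (i x) = 0.
    rewrite -(add_sub (dqS_add hN)); apply/dqS_eq0 => g Ogg.
    rewrite pibar_sub !pibar_i; exact: HEV _ _ (HDE g x y Ogg Dxy).
  exact: nbhs_singleton V0.
case: hfree => _ _ _ _ /(_ (dq hN) (dq_hausdorff hN) (dq_bool hN boolB) (dq_NA hN) _ uc) [phi [[pa pc pe] _]].
have phi0 : phi 0 = 0 := addf_0 pa.
exists [set b | phi b = 0], Og; split => //.
- have h := pc 0; rewrite /continuous_at phi0 in h; exact: h _ (discrete_set1 _).
- split => //= a c ea ec; by rewrite (add_sub pa) ea ec subrr.
move=> g w Ogg /= phiw.
pose chi := fun z : dq hN => dqS hU (pibar g (val z)).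
have chiE : forall a, chi (dqS hN a) = dqS hU (pibar g a).
  move=> a; apply/qS_eq; rewrite -pibar_sub; exact: (qS_valS hN a g Ogg).
have chiA : additive_map (fun b => chi (phi b)).
  move=> a c; rewrite pa.
  rewrite -(qS_val (phi a)) -(qS_val (phi c)).
  rewrite -qS_add.
  have E1 := chiE (val (phi a) + val (phi c)).
  have E2 := chiE (val (phi a)). have E3 := chiE (val (phi c)).
  rewrite /dqS in E1 E2 E3; rewrite E1 E2 E3 pibar_add; exact: qS_add.
have e : (fun b => chi (phi b)) = (fun b => dqS hU (pibar g b)).
  apply: (uniq_ext (dq_hausdorff hU) (dq_bool hU boolB) (dq_NA hU) chiA).
  + move=> u; apply: continuous_comp; [exact: pc | exact: discrete_src_cont].
  + by move=> u v; rewrite pibar_add dqS_add.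
  + move=> u; apply: continuous_comp; [exact: pibar_cont | exact: dqS_cont].
  + by move=> x; rewrite pe chiE.
have := congr1 (fun f => f w) e; rewrite /= phiw.
rewrite -(qS0 hN) chiE pibar0 => /esym /dqS_eq0; done.
Qed.


Lemma pibar_jcont : continuous (fun q : G * B => pibar q.1 q.2).
Proof.
move=> [g0 b0] V /= Vc.
have Vn := nbhs_to0 Vc.
have [U [Uo U0 Usub UV]] := naB _ Vn.
have U0n : nbhs 0 U by apply: open_nbhs_nbhs; split.
have hU : subgrp U by split.
have [W [Og [W0 hW HO HWU]]] := stepA _ U0n hU g0.
have [hGd GdI] := good_sub _ U0n hU g0.
have [s [Gds Ws]] := dense _ hGd GdI _ W0 hW b0.
exists (Og `&` [set g | U (pibar g s - pibar g0 s)], [set b | W (b - b0)]).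
  split => /=; [exact: filterI HO Gds | exact: (nbhs_from0 b0 W0)].
case=> g b [/= [Ogg Gg] Wb].
have Ug : U (pibar g b - pibar g0 b0).
  have W' : W (s - b0).
    by rewrite -opprB; rewrite -sub0r; apply: hW.2 => //; exact: hW.1.
  rewrite -(tel _ (pibar g b) (pibar g b0)) -(tel _ (pibar g b0) (pibar g s) (pibar g0 b0)).
  rewrite -(tel _ (pibar g s) (pibar g0 s) (pibar g0 b0)) -!pibar_sub.
  apply: (subD hU); first exact: HWU.
  apply: (subD hU); first exact: HWU.
  apply: (subD hU); first by [].
  by apply: HWU W'; exact: nbhs_singleton.
have := UV _ Ug; by rewrite /= addrC subrK.
Qed.

Lemma sep_ent : nonarchimedean_uniform X -> forall E, entourage E ->
  exists V : set B, nbhs 0 V /\ forall x y, V (i y - i x) -> E (x, y).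
Proof.
move=> hna E HE.
have [F [HF [Fr Fs Ft] FE]] := hna E HE.
pose f := fun x : X => (fun z : X => if `[< F (x, z) >] then 1 else 0 : 'Z_2) : dzmod (X -> 'Z_2).
have fE : forall x y, F (x, y) -> f x = f y.
  move=> x y Fxy; rewrite /f; apply/funext => z.
  have -> // : `[< F (x, z) >] = `[< F (y, z) >].
  apply/asbool_equiv_eq; split => h; [exact: Ft (Fs _ _ Fxy) h | exact: Ft Fxy h].
have uc : unif_cont_zmod f.
  move=> V V0; exists F; split => // x y Fxy.
  by rewrite (fE _ _ Fxy) subrr; exact: nbhs_singleton.
have hb : boolean_group (dzmod (X -> 'Z_2)).
  by move=> h; apply/funext => z /=; exact: z2.
case: hfree => _ _ _ _ /(_ (dzmod (X -> 'Z_2)) discrete_hausdorff hb (dz_NA _) _ uc) [phi [[pa pc pe] _]].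
have phi0 : phi 0 = 0 := addf_0 pa.
exists [set b | phi b = 0]; split.
  have h := pc 0; rewrite /continuous_at phi0 in h; exact: h _ (discrete_set1 _).
move=> x y /=; rewrite (add_sub pa) !pe => /subr0_eq /(congr1 (fun h => h y)).
rewrite /f asboolT //; case: asboolP => [Fxy _|]; first exact: FE.
by [].
Qed.


Lemma i_inj : hausdorff_space X -> nonarchimedean_uniform X -> injective i.
Proof.
move=> hX hna x y e; apply: hX => A C nA nC.
have [E HE EA] := (nbhsP _ _).1 nA.
have [V [V0 VE]] := sep_ent hna _ HE.
exists y; split; last exact: nbhs_singleton nC.
apply: EA; apply/xsectionP; apply: VE; rewrite e subrr; exact: nbhs_singleton V0.
Qed.

End Main.

Definition mgrp (T : topologicalZmodType) : Type := T.
HB.instance Definition _ (T : topologicalZmodType) := Topological.copy (mgrp T) T.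
HB.instance Definition _ (T : topologicalZmodType) :=
  isGroup.Build (mgrp T) (@addrA T) (@add0r T) (@addr0 T) (@addNr T) (@subrr T).


Theorem theorem7p6 (G : topGroupType) (X : uniformType)
    (pi : G -> X -> X) (B : topologicalZmodType) (i : X -> B) :
  is_topological_group G -> hausdorff_space G ->
  hausdorff_space X -> nonarchimedean_uniform X ->
  is_action pi -> continuous (fun q : G * X => pi q.1 q.2) ->
  pi_uniform pi ->
  is_free_boolean_NA i ->
  (exists pibar : G -> B -> B,
     [/\ is_action pibar,
         (forall g a b, pibar g (a + b) = pibar g a + pibar g b),
         (forall g x, pibar g (i x) = i (pi g x)),
         continuous (fun q : G * B => pibar q.1 q.2) &
         uniform_embedding_zmod i])
  /\ unif_G_automorphizable_NA pi.
Proof.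
move=> hG hGh hX hna hact hcont hpu hfree.
pose pb := pibar G X pi B i hpu hfree.
have emb : uniform_embedding_zmod i.
  split; [exact: (i_inj _ _ _ hfree hX hna) | exact: (ucI _ _ _ hfree) | exact: (sep_ent _ _ _ hfree hna)].
have hA : is_action pb := pibar_action G X pi B i hact hpu hfree.
have hadd : forall g a b, pb g (a + b) = pb g a + pb g b.
  move=> g; exact: pibar_add.
have hi : forall g x, pb g (i x) = i (pi g x).
  move=> g x; exact: pibar_i.
have hc : continuous (fun q : G * B => pb q.1 q.2) := pibar_jcont G X pi B i hcont hpu hfree.
split; first by exists pb.
exists (mgrp B), pb, i; split.
- split; first split.
  + exact: (@add_continuous B).
  + exact: (@opp_continuous B).
  + exact: (hB _ _ _ hfree).
  + move=> V V0; have [H [Ho H0 Hs HV]] := naB _ _ _ hfree V V0.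
    by exists H; split.
- by split.
- exact: hc.
- split.
  + exact: (i_inj _ _ _ hfree hX hna).
  + move=> V V0; have [E [HE HEV]] := ucI _ _ _ hfree V V0; exists E; split => // x y Exy.
    split; last exact: HEV.
    change (V (- i x + i y)); rewrite addrC; exact: HEV.
  + move=> E HE; have [V [V0 VE]] := sep_ent _ _ _ hfree hna E HE; exists V; split => //.
    by move=> x y _ /VE.
- by move=> g x; rewrite hi.
Qed.
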